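(* Let $(R,\mathfrak{m})$ be a Noetherian local ring and let $I$ be an ideal of $R$. Let $x_1,\ldots,x_s,y$ be a minimal generating set of $I$, where $J=(x_1,\ldots,x_s)$ is a reduction of $I$ with reduction number $r=\mathrm{r}_J(I)$. Assume that (a) $x_1,\ldots,x_s$ is a $d$-sequence, and (b) $(x_1,\ldots,x_i)\cap I^{r+1}=(x_1,\ldots,x_i)I^r$ for all $i=1,\ldots,s-1$. Then $\mathrm{rt}(I)\leq \mathrm{r}_J(I)+1$. Suppose in addition that (c) $x_1,\ldots,x_s$ is an $R$-sequence and (d) $(x_1,\ldots,x_i)\cap I^{r}=(x_1,\ldots,x_i)I^{r-1}$ for all $i=1,\ldots,s-1$. Then $\mathrm{rt}(I)=\mathrm{r}_J(I)+1$ and there is a form $Y^{r+1}-\sum_{i=1}^s X_iF_i\in Q_{r+1}$, with $F_i\in V_r$, such that $Q=(Y^{r+1}-\sum_iX_iF_i)+Q\langle r\rangle$.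
   Context: $J\subseteq I$ is a reduction of $I$ if $I^{m+1}=JI^m$ for some $m\ge0$; $\mathrm{r}_J(I)$ is the least such $m$; $I^0=R$. With $J_0=0$, $J_i=(x_1,\ldots,x_i)$, the sequence $x_1,\ldots,x_s$ is a $d$-sequence if $(J_i:x_{i+1}x_j)=(J_i:x_j)$ for all $0\leq i\leq s-1$, $j\geq i+1$. $V=R[X_1,\ldots,X_s,Y]$ graded by total degree, $V_n$ its degree-$n$ part; $\varphi:V\to\mathbf{R}(I)=\bigoplus_{n\ge0}I^nt^n$ sends $X_i\mapsto x_it$, $Y\mapsto yt$; $Q=\ker\varphi=\bigoplus_{n\ge1}Q_n$; $Q\langle n\rangle$ is the ideal generated by homogeneous elements of $Q$ of degree at most $n$; $\mathrm{rt}(I)$ is the least $N\ge1$ with $Q=Q\langle N\rangle$. *)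

(* Defs.v *)
From HB Require Import structures.
From mathcomp Require Import all_boot all_order all_algebra.
From mathcomp Require Import mpoly.
Set Implicit Arguments. Unset Strict Implicit. Unset Printing Implicit Defensive.
Import GRing.Theory.
Local Open Scope ring_scope.

Section Ideals.
Variable R : comNzRingType.

Definition is_ideal (I : R -> Prop) : Prop :=
  [/\ I 0, (forall a b, I a -> I b -> I (a + b)) & (forall a b, I b -> I (a * b))].

Definition idealgen (S : R -> Prop) : R -> Prop :=
  fun a => exists (n : nat) (c g : 'I_n -> R),
      (forall i, S (g i)) /\ a = \sum_(i < n) c i * g i.

Definition eqI (A B : R -> Prop) : Prop := forall a, A a <-> B a.
Definition subI (A B : R -> Prop) : Prop := forall a, A a -> B a.

Definition interI (A B : R -> Prop) : R -> Prop := fun a => A a /\ B a.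

Definition prodI (A B : R -> Prop) : R -> Prop :=
  idealgen (fun a => exists u v, A u /\ B v /\ a = u * v).

Fixpoint powI (I : R -> Prop) (n : nat) : R -> Prop :=
  match n with
  | 0 => fun _ => True
  | n'.+1 => prodI I (powI I n')
  end.

Definition colonI (A : R -> Prop) (b : R) : R -> Prop := fun a => A (a * b).

Definition maximal_ideal (m : R -> Prop) : Prop :=
  [/\ is_ideal m, ~ m 1 &
      forall J, is_ideal J -> subI m J -> eqI J m \/ J 1].

Definition local_ring : Prop :=
  exists m, maximal_ideal m /\ forall m', maximal_ideal m' -> eqI m' m.

Definition noetherian_ring : Prop :=
  forall I, is_ideal I ->
    exists (n : nat) (g : 'I_n -> R), eqI I (idealgen (fun a => exists i, a = g i)).

(* ideal generated by x_0, ..., x_{i-1} (the paper's J_i = (x_1,...,x_i)) *)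
Definition Jseq (x : nat -> R) (i : nat) : R -> Prop :=
  idealgen (fun a => exists2 k, (k < i)%N & a = x k).

Definition Igen (x : nat -> R) (s : nat) (y : R) : R -> Prop :=
  idealgen (fun a => (exists2 k, (k < s)%N & a = x k) \/ a = y).

Definition minimal_gens (x : nat -> R) (s : nat) (y : R) : Prop :=
  forall (n : nat) (g : 'I_n -> R),
    eqI (Igen x s y) (idealgen (fun a => exists i, a = g i)) -> (s.+1 <= n)%N.

Definition is_reduction (J I : R -> Prop) : Prop :=
  subI J I /\ exists m, eqI (powI I m.+1) (prodI J (powI I m)).

Definition reduction_number (J I : R -> Prop) (r : nat) : Prop :=
  eqI (powI I r.+1) (prodI J (powI I r)) /\
  forall m, (m < r)%N -> ~ eqI (powI I m.+1) (prodI J (powI I m)).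

(* d-sequence (paper indices shifted by one: x_{i+1} is [x i]) :
   (J_i : x_{i+1} x_j) = (J_i : x_j) for 0 <= i <= s-1, i+1 <= j <= s *)
Definition d_sequence (x : nat -> R) (s : nat) : Prop :=
  forall i j, (i <= j)%N -> (j < s)%N ->
    eqI (colonI (Jseq x i) (x i * x j)) (colonI (Jseq x i) (x j)).

Definition R_sequence (x : nat -> R) (s : nat) : Prop :=
  (forall i, (i < s)%N -> forall b, Jseq x i (b * x i) -> Jseq x i b) /\
  ~ Jseq x s 1.

End Ideals.

(* The polynomial ring V = R[X_1,...,X_s,Y]: variables 'X_i (i < s) are X_{i+1},
   the last variable 'X_(ord_max) is Y. *)
Section Rees.
Variable R : comNzRingType.
Variables (s : nat) (x : nat -> R) (y : R).

Definition Vvar (i : 'I_s) : {mpoly R[s.+1]} := 'X_(widen_ord (leqnSn s) i).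
Definition Yvar : {mpoly R[s.+1]} := 'X_(@ord_max s).

Definition gen_val (i : 'I_s.+1) : R := if (i < s)%N then x i else y.

(* phi : V -> R(I) ⊆ R[t], X_i |-> x_i t, Y |-> y t *)
Definition phi (F : {mpoly R[s.+1]}) : {poly R} :=
  mmap (@polyC R) (fun i => (gen_val i)%:P * 'X) F.

Definition inQ (F : {mpoly R[s.+1]}) : Prop := phi F = 0.

Definition Qgen (n : nat) : {mpoly R[s.+1]} -> Prop :=
  idealgen (fun F => exists2 d, (d <= n)%N & F \is d.-homog /\ inQ F).

Definition is_rt (N : nat) : Prop :=
  [/\ (1 <= N)%N, eqI inQ (Qgen N) &
      forall M, (1 <= M)%N -> (M < N)%N -> ~ eqI inQ (Qgen M)].

End Rees.

Arguments Yvar {R} s.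
Arguments phi {R} s x y F.
Arguments inQ {R} s x y F.
Arguments Qgen {R} s x y n _.
Arguments is_rt {R} s x y N.
Arguments Vvar {R s} i.

(* Main.v *)
Require Import Defs.
From HB Require Import structures.
From mathcomp Require Import all_boot all_order all_algebra.
From mathcomp Require Import mpoly.
From mathcomp Require Import ring.
From Stdlib Require Import Classical.
Set Implicit Arguments. Unset Strict Implicit. Unset Printing Implicit Defensive.
Import GRing.Theory.
Local Open Scope ring_scope.
Section IdealLemmas.
Variable R : comNzRingType.
Implicit Types (S T A B : R -> Prop).

Lemma ig0 S : idealgen S 0.
Proof. exists 0%N, (fun _ => 0), (fun _ => 0); split; [by case|by rewrite big_ord0]. Qed.

Lemma ig_in S a : S a -> idealgen S a.
Proof.
move=> Sa; exists 1%N, (fun _ => 1), (fun _ => a); split => //.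
by rewrite big_ord1 mul1r.
Qed.

Lemma igD S a b : idealgen S a -> idealgen S b -> idealgen S (a + b).
Proof.
move=> [n [c [g [Hg ->]]]] [m [c' [g' [Hg' ->]]]].
exists (n + m)%N, (fun i => match split i with inl j => c j | inr j => c' j end),
  (fun i => match split i with inl j => g j | inr j => g' j end); split.
  by move=> i; case: (split i).
rewrite big_split_ord /=; congr (_ + _); apply: eq_bigr => i _.
  by rewrite (unsplitK (inl i)).
by rewrite (unsplitK (inr i)).
Qed.

Lemma igM S a b : idealgen S b -> idealgen S (a * b).
Proof.
move=> [n [c [g [Hg ->]]]]; exists n, (fun i => a * c i), g; split => //.
by rewrite mulr_sumr; apply: eq_bigr => i _; rewrite mulrA.
Qed.

Lemma ig_ideal S : is_ideal (idealgen S).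
Proof. by split; [apply: ig0 | apply: igD | move=> a b; apply: igM]. Qed.

Lemma ig_min S T : is_ideal T -> (forall a, S a -> T a) -> forall a, idealgen S a -> T a.
Proof.
move=> [T0 TD TM] ST a [n [c [g [Hg ->]]]].
elim/big_rec: _ => // i x _ Tx; apply: TD => //; apply: TM; exact: ST.
Qed.

Lemma ideal_sum T (I : finType) (F : I -> R) : is_ideal T -> (forall i, T (F i)) -> T (\sum_i F i).
Proof. move=> [T0 TD TM] H; elim/big_rec: _ => // i x _ Tx; exact: TD. Qed.

Lemma ideal_opp T a : is_ideal T -> T a -> T (- a).
Proof. move=> [_ _ TM] Ta; rewrite -mulN1r; exact: TM. Qed.

Lemma ideal_sub T a b : is_ideal T -> T a -> T b -> T (a - b).
Proof. move=> hT Ta Tb; case: (hT) => _ TD _; apply: TD => //; exact: ideal_opp. Qed.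

Lemma ideal_mulr T a b : is_ideal T -> T a -> T (a * b).
Proof. move=> [_ _ TM] Ta; rewrite mulrC; exact: TM. Qed.

Lemma ig_sum S (I : finType) (F : I -> R) : (forall i, idealgen S (F i)) -> idealgen S (\sum_i F i).
Proof. apply: ideal_sum; exact: ig_ideal. Qed.

End IdealLemmas.

Section RingPart.
Variable R : comNzRingType.
Variables (s : nat) (x : nat -> R) (y : R).
Local Notation I := (Igen x s y).
Local Notation J := (Jseq x).

Definition Lin k (a : R) := exists c : nat -> R, a = \sum_(j < k) c j * x j.
Definition LinB k (B : R -> Prop) (a : R) :=
  exists c : nat -> R, (forall j, B (c j)) /\ a = \sum_(j < k) x j * c j.

Lemma Lin_ideal k : is_ideal (Lin k).
Proof.
split.
- by exists (fun _ => 0); rewrite big1 // => j _; rewrite mul0r.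
- move=> a b [c ->] [c' ->]; exists (fun j => c j + c' j).
  by rewrite -big_split; apply: eq_bigr => j _; rewrite mulrDl.
- move=> a b [c ->]; exists (fun j => a * c j).
  by rewrite mulr_sumr; apply: eq_bigr => j _; rewrite mulrA.
Qed.

Lemma LinB_ideal k B : is_ideal B -> is_ideal (LinB k B).
Proof.
move=> [B0 BD BM]; split.
- by exists (fun _ => 0); split => //; rewrite big1 // => j _; rewrite mulr0.
- move=> a b [c [Hc ->]] [c' [Hc' ->]]; exists (fun j => c j + c' j); split.
    by move=> j; apply: BD.
  by rewrite -big_split; apply: eq_bigr => j _; rewrite mulrDr.
- move=> a b [c [Hc ->]]; exists (fun j => a * c j); split; first by move=> j; apply: BM.
  by rewrite mulr_sumr; apply: eq_bigr => j _; rewrite mulrCA.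
Qed.

Lemma Lin_x k j : (j < k)%N -> Lin k (x j).
Proof.
move=> ljk; exists (fun i => (i == j)%:R).
rewrite (bigD1 (Ordinal ljk)) //= eqxx mul1r big1 ?addr0 // => i /= hi.
have -> : (nat_of_ord i == j) = false.
  by apply/negbTE; apply: contra hi => /eqP hij; apply/eqP/val_inj.
by rewrite mul0r.
Qed.

Lemma JseqP k a : J k a <-> Lin k a.
Proof.
split.
- apply: ig_min; first exact: Lin_ideal.
  by move=> b [j ljk ->]; exact: Lin_x.
- move=> [c ->]; apply: ig_sum => j; apply: igM; apply: ig_in.
  by exists j.
Qed.

Lemma Jseq_ideal k : is_ideal (J k).
Proof. exact: ig_ideal. Qed.

Lemma Jseq_mono i k a : (i <= k)%N -> J i a -> J k a.
Proof.
move=> lik; apply: ig_min; first exact: ig_ideal.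
by move=> b [j lji ->]; apply: ig_in; exists j => //; apply: leq_trans lik.
Qed.

Lemma Jseq0 a : J 0 a -> a = 0.
Proof. by move/JseqP=> [c ->]; rewrite big_ord0. Qed.

Lemma Lin_LinB k B a : LinB k B a -> Lin k a.
Proof.
move=> [c [_ ->]]; exists c; apply: eq_bigr => j _; exact: mulrC.
Qed.

Lemma prodJP k B (hB : is_ideal B) a : prodI (J k) B a <-> LinB k B a.
Proof.
split.
- apply: ig_min; first exact: LinB_ideal.
  move=> b [u [v [/JseqP [c ->] [Bv ->]]]].
  exists (fun j => c j * v); split; first by move=> j; case: hB => _ _ BM; exact: BM.
  by rewrite mulr_suml; apply: eq_bigr => j _; rewrite mulrCA mulrA.
- move=> [c [Hc ->]]; apply: ig_sum => j; apply: ig_in.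
  exists (x j), (c j); split; last by split.
  by apply: ig_in; exists (nat_of_ord j).
Qed.

Lemma I_ideal : is_ideal I.
Proof. exact: ig_ideal. Qed.

Lemma I_x j : (j < s)%N -> I (x j).
Proof. by move=> ljs; apply: ig_in; left; exists j. Qed.

Lemma I_y : I y.
Proof. by apply: ig_in; right. Qed.

Lemma J_I a : J s a -> I a.
Proof.
apply: ig_min; first exact: I_ideal.
by move=> b [j ljs ->]; exact: I_x.
Qed.

Lemma powI_ideal n : is_ideal (powI I n).
Proof. by case: n => [|n] /=; [split | exact: ig_ideal]. Qed.

Lemma powI_mul n u v : I u -> powI I n v -> powI I n.+1 (u * v).
Proof. by move=> Iu Pv; apply: ig_in; exists u, v. Qed.

Lemma powI_y n : powI I n (y ^+ n).
Proof.
elim: n => [|n IH] //=; rewrite exprS; exact: powI_mul I_y IH.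
Qed.

Lemma LinB_y n k b : LinB s (powI I n) b -> LinB s (powI I (n + k)) (b * y ^+ k).
Proof.
elim: k => [|k IH]; first by rewrite addn0 expr0 mulr1.
move=> /IH [c [Hc E]]; exists (fun j => y * c j); split.
  by move=> j; rewrite addnS; apply: powI_mul => //; exact: I_y.
rewrite exprS mulrCA E mulr_sumr; apply: eq_bigr => j _; exact: mulrCA.
Qed.

Lemma descA i m b : d_sequence x s -> (i <= m)%N -> (m < s)%N ->
  J i (b * x i) -> J m.+1 b -> J m b.
Proof.
move=> ds hlim lms Jbi /JseqP [c Eb].
rewrite big_ord_recr /= in Eb.
set b' := \sum_(j < m) _ in Eb.
have Jb' : J m b' by apply/JseqP; exists c.
have h1 : J i (b * (x i * x m)) by rewrite mulrA; apply: ideal_mulr => //; exact: Jseq_ideal.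
have h2 : J m (b * x m).
  apply: (Jseq_mono hlim); exact: (proj1 (ds i m hlim lms b) h1).
have h3 : J m (c m * (x m * x m)).
  have -> : c m * (x m * x m) = b * x m - b' * x m by rewrite Eb mulrDl addrC addKr mulrA.
  by apply: ideal_sub h2 _; [exact: Jseq_ideal | apply: ideal_mulr Jb'; exact: Jseq_ideal].
have h4 : J m (c m * x m).
  exact: (proj1 (ds m m (leqnn m) lms (c m)) h3).
rewrite Eb; case: (Jseq_ideal m) => _ D _; exact: D.
Qed.

Lemma descA_iter i b : d_sequence x s -> (i < s)%N ->
  J i (b * x i) -> J s b -> J i b.
Proof.
move=> ds lis Jbi Jsb.
suff H : forall d, (i + d <= s)%N -> J (i + d) b -> J i b.
  by apply: (H (s - i)%N); rewrite subnKC // ltnW.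
elim=> [|d IH] hd hJ; first by rewrite addn0 in hJ.
apply: IH; first by apply: leq_trans hd; rewrite leq_add2l.
apply: (descA ds (m := (i + d)%N)) Jbi _ => //; first exact: leq_addr.
by rewrite addnS in hd.
by rewrite -addnS.
Qed.

Lemma red_pow r N : eqI (powI I r.+1) (prodI (J s) (powI I r)) -> (r <= N)%N ->
  forall a, powI I N.+1 a -> LinB s (powI I N) a.
Proof.
move=> hr; elim: N => [|N IH].
  rewrite leqn0 => /eqP Er a; subst r.
  by move=> /hr /prodJP; apply; exact: powI_ideal.
rewrite leq_eqVlt => /orP [/eqP Er | ltrN] a.
  subst r; by move=> /hr /prodJP; apply; exact: powI_ideal.
have {}IH := IH ltrN.
apply: ig_min; first by apply: LinB_ideal; exact: powI_ideal.
move=> b [u [v [Iu [Pv ->]]]].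
have [c [Hc Ev]] := IH v Pv.
exists (fun j => u * c j); split; first by move=> j; apply: powI_mul.
by rewrite Ev mulr_sumr; apply: eq_bigr => j _; rewrite mulrCA.
Qed.

Definition Hcol N := forall k g, (k < s)%N -> powI I N g -> J k (g * x k) -> J k g.
Definition HP M := forall i a, (i < s)%N -> J i a -> powI I M.+1 a -> LinB i (powI I M) a.

Lemma Hcol_big r N : d_sequence x s -> eqI (powI I r.+1) (prodI (J s) (powI I r)) ->
  (r < N)%N -> Hcol N.
Proof.
move=> ds hr; case: N => [|N] // lrN k g lks Pg Jg.
apply: descA_iter => //; apply/JseqP; apply: Lin_LinB.
exact: (red_pow hr lrN).
Qed.

Lemma HP_step M : Hcol M.+1 -> HP M ->
  (forall a, powI I M.+2 a -> LinB s (powI I M.+1) a) -> HP M.+1.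
Proof.
move=> hc hp red i a lis Ja Pa.
have L := red a Pa.
suff H : forall d, (i + d <= s)%N -> LinB (i + d) (powI I M.+1) a -> LinB i (powI I M.+1) a.
  by apply: (H (s - i)%N); rewrite subnKC // ltnW.
elim=> [|d IH] hd; first by rewrite addn0.
rewrite addnS => -[c [Hc E]].
set k := (i + d)%N in hd E *.
have lks : (k < s)%N by rewrite /k -addnS.
apply: IH; first by apply: ltnW; rewrite /k -addnS.
rewrite big_ord_recr /= in E.
have Jsum : J k (\sum_(j < k) x j * c j).
  by apply/JseqP; exists c; apply: eq_bigr => j _; exact: mulrC.
have Jak : J k (c k * x k).
  have -> : c k * x k = a - \sum_(j < k) x j * c j by rewrite E addrAC subrr add0r mulrC.
  apply: ideal_sub Jsum; first exact: Jseq_ideal.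
  by apply: (Jseq_mono (leq_addr d i)).
have Jck := hc k (c k) lks (Hc k) Jak.
have [e [He Ee]] := hp k (c k) lks Jck (Hc k).
exists (fun j => c j + x k * e j); split.
  move=> j; case: (powI_ideal M.+1) => _ D _; apply: D => //.
  by apply: powI_mul => //; exact: I_x.
rewrite E Ee mulr_sumr -big_split /=; apply: eq_bigr => j _.
by rewrite mulrDr mulrCA.
Qed.

Lemma HP_from (M : nat) :
  (forall i, (1 <= i <= s.-1)%N ->
       eqI (interI (J i) (powI I M.+1)) (prodI (J i) (powI I M))) -> HP M.
Proof.
move=> hb i a lis Ja Pa.
case: i lis Ja => [|i] lis Ja.
  rewrite (Jseq0 Ja); exists (fun _ => 0); split; last by rewrite big_ord0.
  by move=> _; case: (powI_ideal M).
have hi : (1 <= i.+1 <= s.-1)%N by rewrite /= -ltnS prednK // (leq_ltn_trans _ lis).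
have := proj1 (hb i.+1 hi a) (conj Ja Pa).
by move/prodJP; apply; exact: powI_ideal.
Qed.

End RingPart.

Section PolyPart.
Variable R : comNzRingType.
Variables (s : nat) (x : nat -> R) (y : R).
Local Notation I := (Igen x s y).
Local Notation J := (Jseq x).
Local Notation V := {mpoly R[s.+1]}.
Local Notation ph := (phi s x y).

Definition Xn (j : nat) : V := 'X_(inord j).
Local Notation Y := (@Yvar R s).

Definition ev n (G : V) := (ph G)`_n.

Lemma phiD a b : ph (a + b) = ph a + ph b. Proof. by rewrite /phi raddfD. Qed.
Lemma phiB a b : ph (a - b) = ph a - ph b. Proof. by rewrite /phi raddfB. Qed.
Lemma phiM a b : ph (a * b) = ph a * ph b. Proof. by rewrite /phi rmorphM. Qed.
Lemma phi0 : ph 0 = 0. Proof. by rewrite /phi raddf0. Qed.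
Lemma phiC c : ph c%:MP = c%:P. Proof. by rewrite /phi mmapC. Qed.
Lemma phiZ c a : ph (c *: a) = c%:P * ph a. Proof. by rewrite /phi mmapZ. Qed.
Lemma phiX k a : ph (a ^+ k) = ph a ^+ k. Proof. by rewrite /phi rmorphXn. Qed.
Lemma phi_sum k (F : 'I_k -> V) : ph (\sum_(j < k) F j) = \sum_(j < k) ph (F j).
Proof. by rewrite /phi raddf_sum. Qed.

Lemma phiXn j : (j < s)%N -> ph (Xn j) = (x j)%:P * 'X.
Proof.
move=> ljs; rewrite /phi /Xn mmapX mmap1U /gen_val inordK ?ljs //.
exact: ltnW.
Qed.

Lemma phiY : ph Y = y%:P * 'X.
Proof. by rewrite /phi /Yvar mmapX mmap1U /gen_val /= ltnn. Qed.

Lemma Vvar_Xn (i : 'I_s) : Vvar i = Xn i.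
Proof.
rewrite /Vvar /Xn.
have -> : widen_ord (leqnSn s) i = inord i.
  by apply: val_inj; rewrite /= inordK //; exact: ltnW (ltn_ord i).
by [].
Qed.

Lemma coefCXn b e d : (b%:P * 'X^e)`_d = if d == e then b else 0 :> R.
Proof. by rewrite mul_polyC coefZ coefXn; case: eqP; rewrite ?mulr1 ?mulr0. Qed.

Lemma coefCX b k : (b%:P * 'X^k)`_k = b :> R.
Proof. by rewrite coefCXn eqxx. Qed.

Lemma homog0 (G : V) : G \is 0.-homog -> G = (G@_0)%:MP.
Proof.
move=> /dhomogP hG; apply: msize1_polyC; rewrite msizeE.
apply/bigmax_leqP_seq => m hm _; by rewrite (hG m hm).
Qed.

Definition Pd n (G : V) := exists c (H : nat -> V), (forall j, H j \is n.-homog) /\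
  G = c *: Y ^+ n.+1 + \sum_(j < s) Xn j * H j.

Lemma Pd0 n : Pd n 0.
Proof.
exists 0, (fun _ => 0); split; first by move=> j; exact: dhomog0.
by rewrite scale0r add0r big1 // => j _; rewrite mulr0.
Qed.

Lemma PdD n a b : Pd n a -> Pd n b -> Pd n (a + b).
Proof.
move=> [c [H [hH ->]]] [c' [H' [hH' ->]]].
exists (c + c'), (fun j => H j + H' j); split; first by move=> j; apply: dhomogD.
rewrite scalerDl; under [X in _ = _ + X]eq_bigr do rewrite mulrDr.
by rewrite big_split /=; rewrite addrACA.
Qed.

Lemma PdZ n a b : Pd n b -> Pd n (a *: b).
Proof.
move=> [c [H [hH ->]]]; exists (a * c), (fun j => a *: H j); split.
  by move=> j; apply: dhomogZ.
rewrite scalerDr scalerA scaler_sumr; congr (_ + _); apply: eq_bigr => j _.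
by rewrite scalerAr.
Qed.

Lemma Pd_mon n (m : 'X_{1..s.+1}) : mdeg m = n.+1 -> Pd n 'X_[m].
Proof.
move=> dm.
case: (boolP [exists i : 'I_s, m (widen_ord (leqnSn s) i) != 0%N]).
- move/existsP => [i hi]; set w := widen_ord (leqnSn s) i in hi.
  have le : (U_(w) <= m)%MM by rewrite lep1mP.
  exists 0, (fun j => if j == nat_of_ord i then 'X_[m - U_(w)] else 0); split.
    move=> j; case: ifP => _; last exact: dhomog0.
    rewrite dhomogX; apply/eqP; move: dm; rewrite -{1}(submK le) mdegD mdeg1 addn1.
    by case.
  rewrite scale0r add0r (bigD1 i) //= eqxx big1 ?addr0; last first.
    move=> j hj; have -> : (nat_of_ord j == nat_of_ord i) = false.
      by apply/negbTE; apply: contra hj => /eqP hij; apply/eqP/val_inj.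
    by rewrite mulr0.
  by rewrite -Vvar_Xn /Vvar -mpolyXD addmC submK.
- rewrite negb_exists => /forallP hm.
  have Em : m = (U_(@ord_max s) *+ n.+1)%MM.
    apply/mnmP => j; rewrite mulmnE mnm1E.
    case: (unliftP ord_max j) => [k ->|->].
      have -> : lift ord_max k = widen_ord (leqnSn s) k.
        by apply: val_inj => /=; rewrite /bump leqNgt ltn_ord.
      have := hm k; rewrite negbK => /eqP ->.
      suff -> : (ord_max == widen_ord (leqnSn s) k) = false by [].
      by apply/negbTE; rewrite -val_eqE /= neq_ltn ltn_ord orbT.
    rewrite eqxx mul1n -dm mdegE big_ord_recr /= big1 ?add0n // => k _.
    by apply/eqP; have := hm k; rewrite negbK.
  exists 1, (fun _ => 0); split; first by move=> j; exact: dhomog0.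
  rewrite scale1r big1 ?addr0; last by move=> j _; rewrite mulr0.
  by rewrite Em /Yvar mpolyXn.
Qed.

Lemma dec n (G : V) : G \is n.+1.-homog -> Pd n G.
Proof.
move=> /dhomogP hG; rewrite (mpolyE G) big_seq.
elim/big_ind: _ => [|a b|m hm]; [exact: Pd0 | exact: PdD |].
apply: PdZ; apply: Pd_mon; exact: hG.
Qed.

Lemma Xn_homog j : Xn j \is 1.-homog.
Proof. by rewrite /Xn dhomogX; apply/eqP; exact: mdeg1. Qed.

Lemma Y_homog : Y \is 1.-homog.
Proof. by rewrite /Yvar dhomogX; apply/eqP; exact: mdeg1. Qed.

Lemma ev_eq n G b : ph G = b%:P * 'X^n -> ev n G = b.
Proof. by rewrite /ev => ->; rewrite coefCX. Qed.

Lemma phi_dec n c (H : nat -> V) :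
  (forall j, ph (H j) = (ev n (H j))%:P * 'X^n) ->
  ph (c *: Y ^+ n.+1 + \sum_(j < s) Xn j * H j) =
  (c * y ^+ n.+1 + \sum_(j < s) x j * ev n (H j))%:P * 'X^(n.+1).
Proof.
move=> hH; rewrite phiD phiZ phiX phiY phi_sum.
rewrite rmorphD rmorphM rmorphXn /= mulrDl rmorph_sum /= mulr_suml.
congr (_ + _).
  by rewrite exprMn -mulrA.
apply: eq_bigr => j _; rewrite phiM phiXn // hH rmorphM /= exprS.
by rewrite -!mulrA; congr (_ * _); rewrite mulrCA.
Qed.

Lemma EV n (G : V) : G \is n.-homog -> ph G = (ev n G)%:P * 'X^n /\ powI I n (ev n G).
Proof.
elim: n G => [|n IH] G hG.
  rewrite (homog0 hG) phiC expr0 mulr1; split => //.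
  by rewrite /ev phiC coefC.
have [c [H [hH EG]]] := dec hG.
have hH' j : ph (H j) = (ev n (H j))%:P * 'X^n by case: (IH _ (hH j)).
have E := phi_dec c hH'.
rewrite -EG in E; rewrite (ev_eq E); split => //.
case: (powI_ideal s x y n.+1) => _ D M.
apply: D; first by apply: M; exact: (powI_y s x y n.+1).
apply: ideal_sum; first exact: powI_ideal.
move=> j; apply: powI_mul; [exact: I_x | by case: (IH _ (hH j))].
Qed.

Lemma LIFT n a : powI I n a -> exists G : V, G \is n.-homog /\ ph G = a%:P * 'X^n.
Proof.
elim: n a => [|n IH] a Pa.
  exists a%:MP; split; last by rewrite phiC expr0 mulr1.
  by rewrite -alg_mpolyC; apply: dhomogZ; exact: dhomog1.
pose T := fun a => exists G : V, G \is n.+1.-homog /\ ph G = a%:P * 'X^(n.+1).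
have hT : is_ideal T.
  split.
  - by exists 0; split; [exact: dhomog0 | rewrite phi0 mul0r].
  - move=> u v [G [hG EG]] [G' [hG' EG']]; exists (G + G'); split.
      exact: dhomogD.
    by rewrite phiD EG EG' rmorphD mulrDl.
  - move=> u v [G [hG EG]]; exists (u *: G); split; first exact: dhomogZ.
    by rewrite phiZ EG rmorphM mulrA.
apply: (ig_min hT) Pa => b [u [v [Iu [Pv ->]]]].
have [G2 [hG2 EG2]] := IH v Pv.
pose T1 := fun a => exists G : V, G \is 1.-homog /\ ph G = a%:P * 'X.
have hT1 : is_ideal T1.
  split.
  - by exists 0; split; [exact: dhomog0 | rewrite phi0 mul0r].
  - move=> u' v' [G [hG EG]] [G' [hG' EG']]; exists (G + G'); split.
      exact: dhomogD.
    by rewrite phiD EG EG' rmorphD mulrDl.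
  - move=> u' v' [G [hG EG]]; exists (u' *: G); split; first exact: dhomogZ.
    by rewrite phiZ EG rmorphM mulrA.
have [G1 [hG1 EG1]] : T1 u.
  apply: (ig_min hT1) Iu => g [[j ljs ->]|->].
    by exists (Xn j); split; [exact: Xn_homog | exact: phiXn].
  by exists Y; split; [exact: Y_homog | exact: phiY].
exists (G1 * G2); split; first by have := dhomogM hG1 hG2; rewrite add1n.
rewrite phiM EG1 EG2 rmorphM /= exprS.
by rewrite -!mulrA; congr (_ * _); rewrite mulrCA.
Qed.

End PolyPart.

Lemma fin_choice (T : Type) (P : nat -> T -> Prop) k (t0 : T) :
  (forall j, (j < k)%N -> exists v, P j v) -> exists f : nat -> T, forall j, (j < k)%N -> P j (f j).
Proof.
elim: k => [|k IH] H; first by exists (fun _ => t0).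
have [f hf] : exists f : nat -> T, forall j, (j < k)%N -> P j (f j).
  by apply: IH => j ljk; apply: H; exact: ltnW.
have [v hv] := H k (ltnSn k).
exists (fun j => if j == k then v else f j) => j; rewrite ltnS leq_eqVlt.
by case: eqP => [-> _ //| _ /= ljk]; apply: hf.
Qed.

Section KLsec.
Variable R : comNzRingType.
Variables (s : nat) (x : nat -> R) (y : R).
Local Notation I := (Igen x s y).
Local Notation J := (Jseq x).
Local Notation V := {mpoly R[s.+1]}.
Local Notation ph := (phi s x y).
Local Notation Xn := (@Xn R s).
Local Notation ev := (ev x y).

Lemma phi_lin N k (E : nat -> V) (e : nat -> R) : (k <= s)%N ->
  (forall j, (j < k)%N -> ph (E j) = (e j)%:P * 'X^N) ->
  ph (\sum_(j < k) Xn j * E j) = (\sum_(j < k) x j * e j)%:P * 'X^(N.+1).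
Proof.
move=> lks hE; rewrite phi_sum rmorph_sum /= mulr_suml; apply: eq_bigr => j _.
rewrite phiM phiXn; last by apply: leq_trans lks.
rewrite hE // rmorphM /= exprS.
by rewrite -!mulrA; congr (_ * _); rewrite mulrCA.
Qed.

Lemma KL N : Hcol s x y N.+1 -> HP s x y N -> forall k, (k <= s)%N ->
  forall G : nat -> V, (forall j, (j < k)%N -> G j \is N.+1.-homog) ->
  \sum_(j < k) x j * ev N.+1 (G j) = 0 ->
  Qgen s x y N.+1 (\sum_(j < k) Xn j * G j).
Proof.
move=> hc hp; elim=> [|k IH] hk G hG hsum.
  by rewrite big_ord0; exact: ig0.
have lks : (k < s)%N by [].
rewrite big_ord_recr /= in hsum; rewrite big_ord_recr /=.
have Pa j : (j < k.+1)%N -> powI I N.+1 (ev N.+1 (G j)).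
  by move=> hj; case: (EV x y (hG j hj)).
have Jak : J k (ev N.+1 (G k) * x k).
  have -> : ev N.+1 (G k) * x k = - \sum_(j < k) x j * ev N.+1 (G j).
    by apply/eqP; rewrite -addr_eq0 addrC mulrC hsum.
  apply: (ideal_opp (Jseq_ideal x k)).
  by apply/JseqP; exists (fun j => ev N.+1 (G j)); apply: eq_bigr => j _; exact: mulrC.
have Jk := hc k _ lks (Pa k (ltnSn k)) Jak.
have [e [He Ee]] := hp k _ lks Jk (Pa k (ltnSn k)).
have [E hE] : exists E : nat -> V, forall j, (j < k)%N ->
    E j \is N.-homog /\ ph (E j) = (e j)%:P * 'X^N.
  apply: (@fin_choice V (fun j v => v \is N.-homog /\ ph v = (e j)%:P * 'X^N) k 0) => j _; exact: LIFT (He j).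
set q := G k - \sum_(j < k) Xn j * E j.
have hq : q \is N.+1.-homog.
  apply: rpredB; first exact: hG.
  apply: rpred_sum => j _; have := dhomogM (Xn_homog R s j) (proj1 (hE j (ltn_ord j))).
  by rewrite add1n.
have Qq : inQ s x y q.
  rewrite /inQ /q phiB (@phi_lin N k E e (ltnW hk)); last by move=> j hj; case: (hE j hj).
  rewrite -Ee; case: (EV x y (hG k (ltnSn k))) => -> _; exact: subrr.
have -> : \sum_(j < k) Xn j * G j + Xn k * G k =
   Xn k * q + \sum_(j < k) Xn j * (G j + Xn k * E j).
  rewrite /q mulrBr mulr_sumr.
  under [X in _ = _ + X]eq_bigr do rewrite mulrDr mulrCA.
  rewrite big_split /=; ring.
have [_ D M] : is_ideal (Qgen s x y N.+1) := ig_ideal _.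
apply: D; first by apply: M; apply: ig_in; exists N.+1.
apply: (IH (ltnW hk) (fun j => G j + Xn k * E j)) => /=.
  by move=> j hj; apply: rpredD; [apply: hG; exact: ltnW | 
    have := dhomogM (Xn_homog R s k) (proj1 (hE j hj)); rewrite add1n].
have ev' j : (j < k)%N -> ev N.+1 (G j + Xn k * E j) = ev N.+1 (G j) + x k * e j.
  move=> hj; apply: ev_eq; rewrite phiD phiM phiXn // (proj2 (hE j hj)).
  case: (EV x y (hG j (ltnW hj))) => -> _.
  rewrite rmorphD rmorphM /= exprS mulrDl; congr (_ + _).
  by rewrite -!mulrA; congr (_ * _); rewrite mulrCA.
rewrite (eq_bigr (fun j : 'I_k => x j * ev N.+1 (G j) + x k * (x j * e j))); last first.
  by move=> j _; rewrite ev' // mulrDr mulrCA.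
by rewrite big_split /= -mulr_sumr -Ee.
Qed.

End KLsec.

Section MainSec.
Variable R : comNzRingType.
Variables (s : nat) (x : nat -> R) (y : R).
Local Notation I := (Igen x s y).
Local Notation J := (Jseq x).
Local Notation V := {mpoly R[s.+1]}.
Local Notation ph := (phi s x y).
Local Notation Xn := (@Xn R s).
Local Notation ev := (ev x y).
Local Notation Y := (@Yvar R s).
Local Notation inQ := (inQ s x y).

Lemma Q_ideal : is_ideal inQ.
Proof.
split; rewrite /inQ.
- exact: phi0.
- by move=> a b ha hb; rewrite phiD ha hb addr0.
- by move=> a b hb; rewrite phiM hb mulr0.
Qed.

Lemma Qgen_Q n F : Qgen s x y n F -> inQ F.
Proof. by apply: ig_min; [exact: Q_ideal | move=> G [d _ []]]. Qed.

Lemma sum_delta K (a : nat -> R) d : (d < K)%N ->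
  \sum_(e < K) (if d == nat_of_ord e then a e else 0) = a d.
Proof.
move=> hd; rewrite (bigD1 (Ordinal hd)) //= eqxx big1 ?addr0 // => e he.
rewrite ifN //; apply: contra he => /eqP h; apply/eqP/val_inj; by rewrite /= h.
Qed.

Lemma Q_from_homog (T : V -> Prop) : is_ideal T ->
  (forall d G, G \is d.-homog -> inQ G -> T G) -> forall F, inQ F -> T F.
Proof.
move=> hT hH F QF.
rewrite (pihomog_partitionE (leqnn (msize F))).
apply: ideal_sum => // -[d hd] /=.
apply: (hH d); first exact: pihomogP.
set K := msize F in hd *.
have E e : ph (pihomog mdeg e F) = (ev e (pihomog mdeg e F))%:P * 'X^e.
  by case: (EV x y (pihomogP mdeg e F)).
have := QF; rewrite /inQ {1}(pihomog_partitionE (leqnn (msize F))) phi_sum.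
move=> /(congr1 (fun p : {poly R} => p`_d)).
rewrite coef_sum coef0.
under eq_bigr do rewrite E coefCXn.
rewrite (@sum_delta K (fun e => ev e (pihomog mdeg e F))) // => h0.
by rewrite /inQ E h0 mul0r.
Qed.

Lemma r_pos r : minimal_gens x s y -> reduction_number (J s) I r -> (0 < r)%N.
Proof.
move=> mg [hr _]; case: r hr => [|r] // hr.
suff : (s.+1 <= s)%N by rewrite ltnn.
apply: (mg s (fun i : 'I_s => x i)) => a; split.
- move=> Ia.
  have P1 : powI I 1 a by apply: ig_in; exists a, 1; split => //; rewrite mulr1.
  have := proj1 (hr a) P1; move/prodJP => /(_ (powI_ideal s x y 0)) [c [_ ->]].
  apply: ig_sum => j; rewrite mulrC; apply: igM; apply: ig_in.
  by exists j.
- apply: ig_min; first exact: I_ideal.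
  by move=> b [i ->]; apply: I_x.
Qed.

Lemma HPall r : eqI (powI I r.+1) (prodI (J s) (powI I r)) -> d_sequence x s -> HP s x y r ->
  forall N, (r <= N)%N -> Hcol s x y N.+1 /\ HP s x y N.
Proof.
move=> hr ds hp0; elim=> [|N IH].
  rewrite leqn0 => /eqP Er; subst r; split => //; exact: (Hcol_big ds hr).
rewrite leq_eqVlt => /orP [/eqP Er | lt].
  subst r; split => //; apply: (Hcol_big ds hr); exact: ltnSn.
have [hc hp] := IH lt.
have hc' : Hcol s x y N.+2 by apply: (Hcol_big ds hr); apply: ltnW.
split => //; apply: HP_step => //.
by move=> a; apply: (red_pow hr); exact: ltnW.
Qed.

Section WithForm.
Variable r : nat.
Variable Fp : nat -> V.
Hypothesis hFp : forall j, Fp j \is r.-homog.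
Let form : V := Y ^+ r.+1 - \sum_(j < s) Xn j * Fp j.
Hypothesis Qform : inQ form.

Lemma form_homog : form \is r.+1.-homog.
Proof.
apply: rpredB; first by have := dhomogMn r.+1 (Y_homog R s); rewrite mul1n.
apply: rpred_sum => j _; have := dhomogM (Xn_homog R s j) (hFp j); by rewrite add1n.
Qed.

Lemma split_form n c (H : nat -> V) : (r <= n)%N ->
  c *: Y ^+ n.+1 + \sum_(j < s) Xn j * H j =
  (c *: Y ^+ (n - r)) * form + \sum_(j < s) Xn j * (H j + (c *: Y ^+ (n - r)) * Fp j).
Proof.
move=> lrn; rewrite /form mulrBr mulr_sumr.
under [X in _ = _ + X]eq_bigr do rewrite mulrDr mulrCA.
rewrite big_split /= -scalerAl -exprD addnS subnK //.
set A := \sum_(j < s) _; set B := \sum_(j < s) _; ring.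
Qed.

Lemma reduce_step (T : V -> Prop) n G : is_ideal T -> T form -> (r <= n)%N ->
  Hcol s x y n.+1 -> HP s x y n ->
  (forall e F, (e <= n.+1)%N -> F \is e.-homog -> inQ F -> T F) ->
  G \is n.+2.-homog -> inQ G -> T G.
Proof.
move=> hT Tf lrn hc hp IH hG QG.
have [c [H [hH EG]]] := dec hG.
rewrite (split_form c H (leqW lrn)) in EG.
set A := c *: Y ^+ (n.+1 - r) in EG.
set S := \sum_(j < s) _ in EG.
have QS : inQ S.
  have -> : S = G - A * form by rewrite EG addrAC subrr add0r.
  by rewrite /inQ phiB phiM QG Qform mulr0 subrr.
have hA : A \is (n.+1 - r).-homog by apply: dhomogZ; have := dhomogMn (n.+1 - r) (Y_homog R s); rewrite mul1n.
have hG' j : H j + A * Fp j \is n.+1.-homog.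
  apply: rpredD => //; have := dhomogM hA (hFp j); rewrite subnK //; exact: leqW.
have QgS : Qgen s x y n.+1 S.
  apply: (KL hc hp (leqnn s) (G := fun j => H j + A * Fp j)) => [j _|]; first exact: hG'.
  move: QS; rewrite /inQ /S (@phi_lin _ _ x y n.+1 s (fun j => H j + A * Fp j) (fun j => ev n.+1 (H j + A * Fp j)) (leqnn s)).
    by move=> /(congr1 (fun p : {poly R} => p`_(n.+2))); rewrite coefCX coef0.
  by move=> j _; case: (EV x y (hG' j)).
rewrite EG; have [_ D M] := hT; apply: D; first by apply: M.
apply: (ig_min hT) QgS => F [e le [he QF]]; exact: IH he QF.
Qed.

Lemma homog_all (T : V -> Prop) : is_ideal T -> T form ->
  (forall e F, (e <= r.+1)%N -> F \is e.-homog -> inQ F -> T F) ->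
  (forall N, (r <= N)%N -> Hcol s x y N.+1 /\ HP s x y N) ->
  forall d F, F \is d.-homog -> inQ F -> T F.
Proof.
move=> hT Tf base hall.
suff H : forall b d F, (d <= b)%N -> F \is d.-homog -> inQ F -> T F.
  by move=> d F; apply: (H d d F (leqnn d)).
elim=> [|b IH] d F hd hF QF.
  by apply: (base d) => //; apply: leq_trans hd _.
case: (leqP d r.+1) => [le|lt]; first exact: (base d).
case: d lt hd hF => [|[|n]] //; rewrite !ltnS => lrn hnb hF.
have [hc hp] := hall n lrn.
apply: (reduce_step hT Tf lrn hc hp) hF QF => e G le.
apply: IH; exact: leq_trans le hnb.
Qed.

End WithForm.

End MainSec.

Section PsiSec.
Variable R : comNzRingType.
Variables (s : nat) (x : nat -> R) (y : R).
Local Notation I := (Igen x s y).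
Local Notation J := (Jseq x).
Local Notation V := {mpoly R[s.+1]}.
Local Notation ph := (phi s x y).
Local Notation Xn := (@Xn R s).
Local Notation ev := (ev x y).
Local Notation Y := (@Yvar R s).
Local Notation inQ := (inQ s x y).

Definition psi (G : V) : {poly R} :=
  mmap (@polyC R) (fun i : 'I_s.+1 => if (i < s)%N then 0 else 'X) G.

Lemma psiD a b : psi (a + b) = psi a + psi b. Proof. by rewrite /psi raddfD. Qed.
Lemma psiB a b : psi (a - b) = psi a - psi b. Proof. by rewrite /psi raddfB. Qed.
Lemma psiM a b : psi (a * b) = psi a * psi b. Proof. by rewrite /psi rmorphM. Qed.
Lemma psi0 : psi 0 = 0. Proof. by rewrite /psi raddf0. Qed.
Lemma psiC c : psi c%:MP = c%:P. Proof. by rewrite /psi mmapC. Qed.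
Lemma psiZ c a : psi (c *: a) = c%:P * psi a. Proof. by rewrite /psi mmapZ. Qed.
Lemma psiX k a : psi (a ^+ k) = psi a ^+ k. Proof. by rewrite /psi rmorphXn. Qed.
Lemma psi_sum k (F : 'I_k -> V) : psi (\sum_(j < k) F j) = \sum_(j < k) psi (F j).
Proof. by rewrite /psi raddf_sum. Qed.
Lemma psiXn j : (j < s)%N -> psi (Xn j) = 0.
Proof.
move=> ljs; rewrite /psi /Xn mmapX mmap1U inordK ?ljs //; exact: ltnW.
Qed.
Lemma psiY : psi Y = 'X.
Proof. by rewrite /psi /Yvar mmapX mmap1U /= ltnn. Qed.

Lemma psi_Xsum (H : nat -> V) : psi (\sum_(j < s) Xn j * H j) = 0.
Proof. by rewrite psi_sum big1 // => j _; rewrite psiM psiXn // mul0r. Qed.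

Variable M : nat.
Definition Tn (a : R) := LinB x s (powI I M) (a * y ^+ M.+1).

Lemma Tn_ideal : is_ideal Tn.
Proof.
have [L0 LD LM] := LinB_ideal x s (powI_ideal s x y M).
split; rewrite /Tn.
- by rewrite mul0r.
- by move=> a b ha hb; rewrite mulrDl; apply: LD.
- by move=> a b hb; rewrite -mulrA; apply: LM.
Qed.

Definition Un (G : V) := forall i, Tn ((psi G)`_i).

Lemma Un_ideal : is_ideal Un.
Proof.
have [T0 TD TM] := Tn_ideal.
split; rewrite /Un.
- by move=> i; rewrite psi0 coef0.
- by move=> a b ha hb i; rewrite psiD coefD; apply: TD.
- move=> a b hb i; rewrite psiM coefM; apply: ideal_sum; first exact: Tn_ideal.
  by move=> j; apply: TM.
Qed.

Lemma Un_gen d G : (d <= M.+1)%N -> G \is d.-homog -> inQ G -> Un G.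
Proof.
case: d => [|n] hd hG QG.
  move: QG; rewrite (homog0 hG) /inQ phiC => /eqP; rewrite polyC_eq0 => /eqP ->.
  by rewrite /Un psiC => i; rewrite coefC; case: ifP => _; rewrite /Tn mul0r; case: (LinB_ideal x s (powI_ideal s x y M)).
have [c [H [hH EG]]] := dec hG.
have hH' j : ph (H j) = (ev n (H j))%:P * 'X^n by case: (EV x y (hH j)).
have E := phi_dec c hH'.
rewrite -EG QG in E.
have E0 : c * y ^+ n.+1 + \sum_(j < s) x j * ev n (H j) = 0.
  by have := congr1 (fun p : {poly R} => p`_(n.+1)) E; rewrite coef0 coefCX.
have Tc : Tn c.
  have L : LinB x s (powI I n) (c * y ^+ n.+1).
    exists (fun j => - ev n (H j)); split.
      by move=> j; apply: ideal_opp; [exact: powI_ideal | case: (EV x y (hH j))].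
    rewrite (eq_bigr (fun j : 'I_s => - (x j * ev n (H j)))); last by move=> j _; rewrite mulrN.
    by rewrite sumrN; apply/eqP; rewrite -addr_eq0 E0.
  have := LinB_y (M - n) L; rewrite subnKC // -mulrA -exprD addSn subnKC //.
rewrite /Un EG psiD psi_Xsum addr0 psiZ psiX psiY => i.
rewrite coefCXn; case: ifP => _ //.
by rewrite /Tn mul0r; case: (LinB_ideal x s (powI_ideal s x y M)).
Qed.

Lemma not_red : reduction_number (J s) I M.+1 -> Tn 1 -> False.
Proof.
move=> [_ hmin] T1; apply: (hmin M (ltnSn M)) => a; split.
- move=> Pa; have [G [hG EG]] := LIFT Pa.
  have [c [H [hH EG']]] := dec hG.
  have hH' j : ph (H j) = (ev M (H j))%:P * 'X^M by case: (EV x y (hH j)).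
  have E := phi_dec c hH'; rewrite -EG' EG in E.
  have Ea : a = c * y ^+ M.+1 + \sum_(j < s) x j * ev M (H j).
    by have := congr1 (fun p : {poly R} => p`_(M.+1)) E; rewrite !coefCX.
  apply/prodJP; first exact: powI_ideal.
  have [L0 LD LM] := LinB_ideal x s (powI_ideal s x y M).
  rewrite Ea; apply: LD.
    by have := LM c _ T1; rewrite mul1r.
  exists (fun j => ev M (H j)); split => //.
  by move=> j; case: (EV x y (hH j)).
- apply: ig_min; first exact: powI_ideal.
  by move=> b [u [v [Ju [Pv ->]]]]; apply: powI_mul => //; exact: J_I.
Qed.

Lemma form_notin M' (Fp : nat -> V) : (M' <= M.+1)%N ->
  Qgen s x y M' (Y ^+ M.+2 - \sum_(j < s) Xn j * Fp j) -> Tn 1.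
Proof.
move=> hM' Qf.
have : Un (Y ^+ M.+2 - \sum_(j < s) Xn j * Fp j).
  apply: (ig_min Un_ideal) Qf => F [e le [he QF]].
  apply: (Un_gen (d := e)) => //; exact: leq_trans le hM'.
move=> /(_ M.+2); rewrite psiB psi_Xsum subr0 psiX psiY coefXn eqxx.
by [].
Qed.

End PsiSec.

Lemma least_ex (P : nat -> Prop) K : (exists M, (1 <= M <= K)%N /\ P M) ->
  exists N, [/\ (1 <= N <= K)%N, P N & forall M, (1 <= M)%N -> (M < N)%N -> ~ P M].
Proof.
elim: K => [|K IH] [M [hM PM]].
  by move: hM; case: M {PM} => //.
case: (classic (exists M, (1 <= M <= K)%N /\ P M)) => [h|h].
  have [N [hN PN hmin]] := IH h; exists N; split => //.
  by case/andP: hN => -> /= hN; apply: leq_trans hN _.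
have EM : M = K.+1.
  apply/eqP; rewrite eqn_leq; case/andP: hM => h1 ->; rewrite /=.
  rewrite ltnNge; apply/negP => hK; apply: h; exists M; split => //.
  by rewrite h1.
subst M; exists K.+1; split => // M' h1 h2 PM'; apply: h; exists M'; split => //.
by rewrite h1 -ltnS.
Qed.

Theorem mainTheorem4 (R : comNzRingType) (s : nat) (x : nat -> R) (y : R) (r : nat) :
  noetherian_ring R -> local_ring R ->
  minimal_gens x s y ->
  is_reduction (Jseq x s) (Igen x s y) ->
  reduction_number (Jseq x s) (Igen x s y) r ->
  (* (a) *) d_sequence x s ->
  (* (b) *) (forall i, (1 <= i <= s.-1)%N ->
       eqI (interI (Jseq x i) (powI (Igen x s y) r.+1))
           (prodI (Jseq x i) (powI (Igen x s y) r))) ->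
  (exists N, is_rt s x y N /\ (N <= r.+1)%N) /\
  ((* (c) *) R_sequence x s ->
   (* (d) *) (forall i, (1 <= i <= s.-1)%N ->
       eqI (interI (Jseq x i) (powI (Igen x s y) r))
           (prodI (Jseq x i) (powI (Igen x s y) r.-1))) ->
   is_rt s x y r.+1 /\
   exists F : 'I_s -> {mpoly R[s.+1]},
     (forall i, F i \is r.-homog) /\
     inQ s x y (Yvar s ^+ r.+1 - \sum_(i < s) Vvar i * F i) /\
     eqI (inQ s x y)
         (idealgen (fun G => G = Yvar s ^+ r.+1 - \sum_(i < s) Vvar i * F i
                             \/ Qgen s x y r G))).
Proof.
move=> _ _ mg _ hrn ds hb.
have hr := proj1 hrn.
have r0 := r_pos mg hrn.
have [fc [Hfc Efc]] := red_pow hr (leqnn r) (powI_y s x y r.+1).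
have [f0 hf0] : exists f : nat -> {mpoly R[s.+1]}, forall j, (j < s)%N ->
    f j \is r.-homog /\ phi s x y (f j) = (fc j)%:P * 'X^r.
  apply: (@fin_choice _ (fun j v => v \is r.-homog /\ phi s x y v = (fc j)%:P * 'X^r) s 0).
  by move=> j _; exact: LIFT (Hfc j).
pose Fp j := if (j < s)%N then f0 j else 0.
have hFp j : Fp j \is r.-homog.
  by rewrite /Fp; case: ifP => h; [case: (hf0 j h) | exact: dhomog0].
have phFp j : (j < s)%N -> phi s x y (Fp j) = (fc j)%:P * 'X^r.
  by move=> h; rewrite /Fp h; case: (hf0 j h).
set form := Yvar s ^+ r.+1 - \sum_(j < s) Xn R s j * Fp j.
have Qform : inQ s x y form.
  rewrite /inQ /form phiB (@phi_lin _ _ x y r s Fp fc (leqnn s)); last by move=> j; exact: phFp.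
  by rewrite phiX phiY -Efc exprMn -rmorphXn /= subrr.
have hform : form \is r.+1.-homog by exact: form_homog.
have Tform : Qgen s x y r.+1 form by apply: ig_in; exists r.+1.
have hall := HPall hr ds (HP_from hb).
have Qideal : forall n, is_ideal (Qgen s x y n) by move=> n; exact: ig_ideal.
have P1 : eqI (inQ s x y) (Qgen s x y r.+1).
  move=> F; split; last exact: Qgen_Q.
  apply: Q_from_homog; first exact: Qideal.
  apply: (homog_all hFp Qform (Qideal r.+1) Tform) => // e G le he QG.
  by apply: ig_in; exists e.
split.
  have [N [hN PN hmin]] := least_ex (K := r.+1) (P := fun M => eqI (inQ s x y) (Qgen s x y M))
    (ex_intro _ r.+1 (conj (leqnn _) P1)).
  case/andP: hN => h1 h2; exists N; split => //; split => //.
move=> rs hd.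
have [M EM] : exists M, r = M.+1 by exists r.-1; rewrite prednK.
subst r.
have hcol : Hcol s x y M.+1.
  move=> k g lks _ Jg; exact: (proj1 rs k lks g Jg).
have hpM : HP s x y M by apply: HP_from; exact: hd.
have Eform : Yvar s ^+ M.+2 - \sum_(i < s) Vvar i * (fun i : 'I_s => Fp i) i = form.
  by rewrite /form; congr (_ - _); apply: eq_bigr => i _; rewrite Vvar_Xn.
split.
  split => // M' h1 h2 heq.
  have := proj1 (heq form) Qform.
  move/(form_notin (M := M) h2) => T1.
  exact: (not_red hrn T1).
exists (fun i : 'I_s => Fp i); rewrite Eform; split => //; split => //.
pose T2 := idealgen (fun G => G = form \/ Qgen s x y M.+1 G).
have hT2 : is_ideal T2 by exact: ig_ideal.
have T2f : T2 form by apply: ig_in; left.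
move=> F; split; last first.
  apply: ig_min; first exact: Q_ideal.
  by move=> G [->|]; [exact: Qform | exact: Qgen_Q].
apply: Q_from_homog => //.
apply: (homog_all hFp Qform hT2 T2f) => // e G le he QG.
rewrite leq_eqVlt in le; case/orP: le => [/eqP Ee|le]; last first.
  by apply: ig_in; right; apply: ig_in; exists e.
subst e.
have [c [H [hH EG]]] := dec he.
rewrite (split_form Fp c H (leqnn M.+1)) subnn expr0 in EG.
rewrite -/form in EG.
set S := \sum_(j < s) _ in EG.
have hG' j : H j + c *: 1 * Fp j \is M.+1.-homog.
  by apply: rpredD => //; rewrite -scalerAl mul1r; apply: dhomogZ.
have QS : inQ s x y S.
  have -> : S = G - c *: 1 * form by rewrite EG addrAC subrr add0r.
  by rewrite /inQ phiB phiM Qform mulr0 subr0.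
have QgS : Qgen s x y M.+1 S.
  apply: (KL hcol hpM (leqnn s) (G := fun j => H j + c *: 1 * Fp j)) => [j _|]; first exact: hG'.
  move: QS; rewrite /inQ /S (@phi_lin _ _ x y M.+1 s (fun j => H j + c *: 1 * Fp j)
     (fun j => ev x y M.+1 (H j + c *: 1 * Fp j)) (leqnn s)).
    by move=> /(congr1 (fun p : {poly R} => p`_(M.+2))); rewrite coefCX coef0.
  by move=> j _; case: (EV x y (hG' j)).
rewrite EG; have [_ D Mu] := hT2; apply: D; first by apply: Mu.
by apply: ig_in; right.
Qed.
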